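(* Assemblage maps are in bijection with $r$-straightenings, $r$-cyclic assemblage maps are in bijection with $r$-cyclic straightenings, and $r$-cyclic assemblage maps with duality are in bijection with $r$-cyclic straightenings with duality.
   Context: Let $r$ be a positive integer and consider the standard simplex $\triangle^{r-1}$ with vertex set $\{0,1,\dots,r-1\}$. The barycentric subdivision $\operatorname{sd}\partial\triangle^{r-1}$ of its boundary is the simplicial complex with one vertex for each non-empty proper subset (face) of $\{0,\dots,r-1\}$ and one $k$-face for each ascending chain $\tau_0\subset\tau_1\subset\dots\subset\tau_k$ of such faces; this face is written $(\bar\tau_0|\bar\tau_1|\dots|\bar\tau_k)$ with $\bar\tau_i=\tau_i\smallsetminus\tau_{i-1}$. Let $s_*$ be the chain map from the normalized chains of $\partial\triangle^{r-1}$ to the normalized chains of $\operatorname{sd}\partial\triangle^{r-1}$ given on an ordered generator $[a_0,\dots,a_{k-1}]$ by $s_*([a_0,\dots,a_{k-1}])=\sum_{\pi\in\Sigma_k}(-1)^{\operatorname{sign}(\pi)}(a_{\pi(0)}|a_{\pi(1)}|\dots|a_{\pi(k-1)})$. An assemblage map is a simplicial map $g\colon\operatorname{sd}\partial\triangle^{r-1}\to\partial\triangle^{r-1}$ such that $g_*\circ s_*$ is the identity. The cyclic group $\mathbb{C}_r=\langle\rho\rangle$ acts on $\{0,\dots,r-1\}$ by $i\mapsto i+1 \bmod r$ (forward action), hence on $\partial\triangle^{r-1}$ and $\operatorname{sd}\partial\triangle^{r-1}$; an $r$-cyclic assemblage map is an assemblage map that is $\mathbb{C}_r$-equivariant. Let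 $\Lambda$ be the endomorphism of $\operatorname{sd}\partial\triangle^{r-1}$ sending an ascending chain $\tau_0\subset\dots\subset\tau_{k-1}$ to $(-1)^{\binom{k}{2}}\,\tau_{k-1}^c\subset\dots\subset\tau_0^c$ (complements in $\{0,\dots,r-1\}$). An $r$-cyclic assemblage map with duality is an $r$-cyclic assemblage map $g$ such that the composition $\rho^{-1}\circ g\circ\Lambda\colon\operatorname{sd}\partial\triangle^{r-1}\to\partial\triangle^{r-1}$ is also an assemblage map. An $r$-straightening is a choice, for each non-empty proper subset $\tau$ of $\{0,1,\dots,r-1\}$, of an element $x_\tau\in\tau$; it is $r$-cyclic if it is equivariant with respect to the action of $\mathbb{C}_r$, and it is an $r$-cyclic straightening with duality if moreover the cyclic predecessor of $x_\tau$ is not an element of $\tau$. *)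

(* Defs.v *)
From mathcomp Require Import all_boot all_order all_algebra all_fingroup.
Set Implicit Arguments. Unset Strict Implicit. Unset Printing Implicit Defensive.
Import GRing.Theory Num.Theory.
Local Open Scope ring_scope.

(* Vertex set {0,...,r-1} = 'I_r.  A vertex map sd∂Δ^{r-1} -> ∂Δ^{r-1} is a
   function g : {set 'I_r} -> 'I_r; only its values on faces (non-empty proper
   subsets) matter. *)

Section Defs.
Variable r : nat.

(* faces of ∂Δ^{r-1} = vertices of sd∂Δ^{r-1} *)
Definition is_face (t : {set 'I_r}) : bool := (t != set0) && (t != setT).

(* simplices of sd∂Δ^{r-1}: non-empty strictly ascending chains of faces *)
Definition is_sd_simplex (c : seq {set 'I_r}) : bool :=
  [&& c != [::], all is_face c & sorted (fun A B : {set 'I_r} => A \proper B) c].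

(* g is a simplicial map sd∂Δ -> ∂Δ: images of simplices are faces *)
Definition simplicial (g : {set 'I_r} -> 'I_r) : Prop :=
  forall c, is_sd_simplex c -> [set g t | t in c] != setT.

Definition ninv (s : seq 'I_r) : nat :=
  \sum_(i < size s) \sum_(j < size s | (i < j)%N)
     (nth 0%N (map val s) j < nth 0%N (map val s) i)%N.

(* Oriented (normalized) chains of ∂Δ^{r-1} with integer coefficients are
   functions {set 'I_r} -> int (coefficient of each face, oriented by the
   increasing order of its vertices).  [orient s] is the chain represented by
   the ordered simplex [s_0,...,s_k]: 0 if it has a repeated vertex, otherwise
   the sign of the sorting permutation times the face. *)
Definition orient (s : seq 'I_r) : {set 'I_r} -> int :=
  fun A => if uniq s && ([set x in s] == A) then (-1) ^+ ninv s else 0.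

(* the flag (a_{π0} | a_{π1} | ... | a_{π(k-1)}) of sd∂Δ, as the chain
   {a_{π0}} ⊂ {a_{π0},a_{π1}} ⊂ ... *)
Definition flag k (a : k.-tuple 'I_r) (p : 'S_k) : seq {set 'I_r} :=
  [seq [set tnth a (p i) | i : 'I_k & (i <= j)%N] | j : 'I_k <- enum 'I_k].

Definition sgn k (p : 'S_k) : int := (-1) ^+ odd_perm p.

(* F describes a chain map sd∂Δ -> ∂Δ by its values on generators (flags).
   [comp_s_id F] : F_* ∘ s_* is the identity, checked on every ordered
   generator [a_0,...,a_{k-1}] of the chains of ∂Δ (distinct vertices,
   spanning a face). *)
Definition comp_s_id (F : seq {set 'I_r} -> {set 'I_r} -> int) : Prop :=
  forall k (a : k.-tuple 'I_r), (0 < k)%N -> uniq a -> is_face [set x in a] ->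
    forall A : {set 'I_r},
      \sum_(p : 'S_k) sgn p * F (flag a p) A = orient a A.

Definition push (g : {set 'I_r} -> 'I_r) (c : seq {set 'I_r}) : {set 'I_r} -> int :=
  orient (map g c).

Definition assemblage (g : {set 'I_r} -> 'I_r) : Prop :=
  simplicial g /\ comp_s_id (push g).

Definition rho (i : 'I_r) : 'I_r := ordS i.
Definition rho_inv (i : 'I_r) : 'I_r := ord_pred i.
Definition rho_set (t : {set 'I_r}) : {set 'I_r} := [set rho x | x in t].

Definition equivariant (g : {set 'I_r} -> 'I_r) : Prop :=
  forall t, is_face t -> g (rho_set t) = rho (g t).

Definition cyclic_assemblage (g : {set 'I_r} -> 'I_r) : Prop :=
  assemblage g /\ equivariant g.

Definition Lambda_sign (c : seq {set 'I_r}) : int := (-1) ^+ 'C(size c, 2).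
Definition Lambda_flag (c : seq {set 'I_r}) : seq {set 'I_r} :=
  rev (map (fun t => ~: t) c).

(* the composite ρ^{-1} ∘ g ∘ Λ, on generators of sd∂Δ; its underlying
   vertex map is τ ↦ ρ^{-1}(g(τ^c)) *)
Definition dual_vertex_map (g : {set 'I_r} -> 'I_r) : {set 'I_r} -> 'I_r :=
  fun t => rho_inv (g (~: t)).
Definition dual_chain_map (g : {set 'I_r} -> 'I_r) (c : seq {set 'I_r})
  : {set 'I_r} -> int :=
  fun A => Lambda_sign c * orient (map (fun t => rho_inv (g t)) (Lambda_flag c)) A.

Definition cyclic_assemblage_dual (g : {set 'I_r} -> 'I_r) : Prop :=
  cyclic_assemblage g /\
  (simplicial (dual_vertex_map g) /\ comp_s_id (dual_chain_map g)).

Definition straightening (x : {set 'I_r} -> 'I_r) : Prop :=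
  forall t, is_face t -> x t \in t.

Definition cyclic_straightening (x : {set 'I_r} -> 'I_r) : Prop :=
  straightening x /\ equivariant x.

Definition cyclic_straightening_dual (x : {set 'I_r} -> 'I_r) : Prop :=
  cyclic_straightening x /\ (forall t, is_face t -> rho_inv (x t) \notin t).

End Defs.

(* Main.v *)
Require Import Defs.
From mathcomp Require Import all_boot all_order all_algebra all_fingroup zify.
Set Implicit Arguments. Unset Strict Implicit. Unset Printing Implicit Defensive.
Import GRing.Theory Num.Theory.
Local Open Scope ring_scope.
Definition Fs k (f : 'I_k -> nat) : nat :=
  \sum_(i < k) \sum_(j < k | (i < j)%N) (f j < f i)%N.
Definition Vp k (f : 'I_k -> nat) : int :=
  \prod_(i < k) \prod_(j < k | (i < j)%N) ((f j)%:Z - (f i)%:Z).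
Definition Np k (f : 'I_k -> nat) : int :=
  \prod_(i < k) \prod_(j < k | (i < j)%N) `|(f j)%:Z - (f i)%:Z|.

Lemma sign_sum (I : Type) (r : seq I) (P : pred I) (F : I -> nat) :
  (-1) ^+ (\sum_(i <- r | P i) F i)%N = \prod_(i <- r | P i) ((-1) ^+ F i) :> int.
Proof. by apply: (big_morph (fun n => (-1) ^+ n : int)) => [x y|]; rewrite ?exprD ?expr0. Qed.

Lemma Vp_split k f : @Vp k f = (-1) ^+ Fs f * Np f.
Proof.
rewrite /Vp /Fs /Np sign_sum -big_split /=; apply: eq_bigr => i _.
rewrite sign_sum -big_split /=; apply: eq_bigr => j _.
case: ltnP => h /=.
  rewrite expr1 ler0_norm ?opprB ?mulN1r ?opprB //.
  by rewrite subr_le0 lez_nat ltnW.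
by rewrite expr0 mul1r ger0_norm // subr_ge0 lez_nat.
Qed.

Lemma Vp_det k f : @Vp k f = \det (Vandermonde k (\row_j (f j)%:Z)).
Proof. by rewrite det_Vandermonde /Vp; apply: eq_bigr => i _; apply: eq_bigr => j _; rewrite !mxE. Qed.

Lemma Vp_perm k f (p : 'S_k) : Vp (f \o p) = (-1) ^+ p * Vp f.
Proof.
rewrite !Vp_det.
have -> : Vandermonde k (\row_j (f (p j))%:Z) = col_perm p (Vandermonde k (\row_j (f j)%:Z)).
  by apply/matrixP => i j; rewrite !mxE.
by rewrite col_permE det_mulmx det_perm odd_permV mulrC.
Qed.

Lemma Np_ge0 k f : 0 <= @Np k f.
Proof. by apply: prodr_ge0 => i _; apply: prodr_ge0. Qed.

Lemma Np_perm k f (p : 'S_k) : Np (f \o p) = Np f.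
Proof.
have := congr1 (fun x : int => `|x|) (Vp_perm f p).
rewrite !Vp_split !normrM !normr_sign !mul1r !ger0_norm //; exact: Np_ge0.
Qed.

Lemma Np_neq0 k f : injective f -> @Np k f != 0.
Proof.
move=> fi; rewrite /Np; apply/prodf_neq0 => i _; apply/prodf_neq0 => j lij.
rewrite normr_eq0 subr_eq0 eqz_nat; apply/eqP => /fi eij.
by move: lij; rewrite eij ltnn.
Qed.

Lemma Fs_perm k f (p : 'S_k) : injective f ->
  (-1) ^+ Fs (f \o p) = (-1) ^+ p * (-1) ^+ Fs f :> int.
Proof.
move=> fi; have := Vp_perm f p; rewrite !Vp_split Np_perm mulrA => /mulIf; apply.
exact: Np_neq0.
Qed.




Lemma nth_val_tnth r k (t : k.-tuple 'I_r) (i : 'I_k) : nth 0%N (map val t) i = val (tnth t i).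
Proof. by rewrite (nth_map (tnth t i)) ?size_tuple // -tnth_nth. Qed.

Lemma ninv_seq r (s : seq 'I_r) : ninv s = Fs (fun i => val (tnth (in_tuple s) i)).
Proof.
rewrite /ninv /Fs; apply: eq_bigr => i _; apply: eq_bigr => j _.
by rewrite !(nth_val_tnth (in_tuple s)).
Qed.

Lemma ninv_tuple r k (t : k.-tuple 'I_r) : ninv t = Fs (fun i => val (tnth t i)).
Proof.
rewrite /ninv /Fs size_tuple; apply: eq_bigr => i _; apply: eq_bigr => j _.
by rewrite !nth_val_tnth.
Qed.


Lemma tri_sum k : (\sum_(i < k) \sum_(j < k) ((i < j)%N : nat))%N = 'C(k, 2).
Proof.
elim: k => [|k IH]; first by rewrite big_ord0.
rewrite big_ord_recr /= [X in (_ + X)%N]big1; last first.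
  by move=> j _; rewrite ltnNge -ltnS ltn_ord.
rewrite addn0 binS bin1 -IH.
rewrite -[X in _ = (_ + X)%N](card_ord k) -sum1_card -big_split /=.
by apply: eq_bigr => i _; rewrite big_ord_recr /= ltn_ord.
Qed.

Lemma Fs_mk k f : Fs f = (\sum_(i < k) \sum_(j < k) (((i < j) && (f j < f i))%N : nat))%N.
Proof.
by apply: eq_bigr => i _; rewrite big_mkcond /=; apply: eq_bigr => j _; case: (i < j)%N.
Qed.

Lemma Fs_rev k (f : 'I_k -> nat) : injective f ->
  (Fs (fun i => f (rev_ord i)) + Fs f)%N = 'C(k, 2).
Proof.
move=> fi; rewrite !Fs_mk -tri_sum.
rewrite (reindex_inj rev_ord_inj) /=.
under eq_bigr => i _ do rewrite (reindex_inj rev_ord_inj) /=.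
rewrite exchange_big -big_split /=; apply: eq_bigr => i _.
rewrite -big_split /=; apply: eq_bigr => j _.
rewrite !rev_ordK /= ltn_sub2lE ?ltn_ord // ltnS.
case: (ltnP i j) => lij /=; last by [].
have : f i != f j by apply/eqP => /fi e; move: lij; rewrite e ltnn.
rewrite neq_ltn => /orP [] h; rewrite h.
  by rewrite ltnNge ltnW.
by rewrite ltnNge ltnW.
Qed.

Section Pre.
Variable r : nat.
Variable g : {set 'I_r} -> 'I_r.

Definition pre (s : seq 'I_r) : seq 'I_r :=
  [seq g [set x in take j.+1 s] | j <- iota 0 (size s)].

Lemma pre_rcons s x : pre (rcons s x) = rcons (pre s) (g [set y in rcons s x]).
Proof.
rewrite /pre size_rcons -addn1 iotaD map_cat /= cats1 add0n; congr rcons.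
  apply/eq_in_map => j; rewrite mem_iota => /andP [_ hj].
  by rewrite -cats1 takel_cat.
by rewrite take_oversize // size_rcons.
Qed.

Lemma pre_good s : uniq s ->
  (forall S : {set 'I_r}, S \subset [set x in s] -> S != set0 -> g S \in S) ->
  uniq (pre s) -> pre s = s.
Proof.
elim/last_ind: s => [//|s x IH].
rewrite rcons_uniq pre_rcons rcons_uniq => /andP [xs us] H /andP [gn up].
have IHs : pre s = s.
  apply: IH => // S sub ne; apply: H ne; apply: (subset_trans sub).
  by apply/subsetP => y; rewrite !inE mem_rcons in_cons => ->; rewrite orbT.
rewrite IHs; congr rcons.
have : g [set y in rcons s x] \in [set y in rcons s x].
  apply: H => //; apply/set0Pn; exists x; by rewrite inE mem_rcons mem_head.
by move: gn; rewrite IHs inE mem_rcons in_cons => /negbTE -> ; rewrite orbF => /eqP.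
Qed.

Lemma set_rcons_del (s : seq 'I_r) x : uniq (rcons s x) ->
  [set y in s] = [set y in rcons s x] :\ x.
Proof.
rewrite rcons_uniq => /andP [xs _]; apply/setP => y.
rewrite !inE mem_rcons in_cons; case: eqP => [->|] //=.
by rewrite (negbTE xs).
Qed.

Lemma pre_unique s s' : uniq s -> uniq s' -> pre s = s -> pre s' = s' ->
  [set x in s] = [set x in s'] -> s = s'.
Proof.
elim/last_ind: s s' => [|s x IH] s'.
  case/lastP: s' => [//|s' x'] _ _ _ _ /setP /(_ x').
  by rewrite !inE mem_rcons mem_head.
case/lastP: s' => [|s' x'].
  by move=> _ _ _ _ /setP /(_ x); rewrite !inE mem_rcons mem_head.
move=> u u' P P' E.
move: (P) (P'); rewrite !pre_rcons => /rcons_inj [P1 gx] /rcons_inj [P1' gx'].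
have xx : x = x' by rewrite -gx -gx' E.
subst x'.
rewrite (IH s') //.
- by move: u; rewrite rcons_uniq => /andP [].
- by move: u'; rewrite rcons_uniq => /andP [].
- by rewrite (set_rcons_del u) (set_rcons_del u') E.
Qed.

Lemma pre_exists n (S : {set 'I_r}) : #|S| = n ->
  (forall S' : {set 'I_r}, S' \subset S -> S' != set0 -> g S' \in S') ->
  exists s, [/\ uniq s, [set x in s] = S & pre s = s].
Proof.
elim: n S => [|n IH] S cS H.
  exists [::]; split => //; apply/setP => y; rewrite !inE.
  by move/eqP: cS; rewrite cards_eq0 => /eqP ->; rewrite inE.
have ne : S != set0 by rewrite -card_gt0 cS.
have gS : g S \in S by apply: H (subxx S) ne.
have cS' : #|S :\ g S| = n.
  by move: cS; rewrite (cardsD1 (g S)) gS add1n => -[].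
have H' : forall S' : {set 'I_r}, S' \subset S :\ g S -> S' != set0 -> g S' \in S'.
  move=> S' sub ne'; apply: H ne'; apply: (subset_trans sub); exact: subD1set.
have [s [us es ps]] := IH _ cS' H'.
have ns : g S \notin s.
  have -> : (g S \in s) = (g S \in [set x in s]) by rewrite inE.
  by rewrite es setD11.
exists (rcons s (g S)); split.
- by rewrite rcons_uniq ns us.
- apply/setP => y; rewrite !inE mem_rcons in_cons; case: eqP => [->|/eqP ny] //=.
  have -> : (y \in s) = (y \in [set x in s]) by rewrite inE.
  by rewrite es !inE ny.
- rewrite pre_rcons ps; congr rcons; congr g; apply/setP => y.
  rewrite !inE mem_rcons in_cons; case: eqP => [->|/eqP ny] //=.
  have -> : (y \in s) = (y \in [set x in s]) by rewrite inE.
  by rewrite es !inE ny.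
Qed.
End Pre.

Lemma set_prefix r k (t : k.-tuple 'I_r) (j : 'I_k) :
  [set tnth t i | i : 'I_k & (i <= j)%N] = [set x in take j.+1 t].
Proof.
apply/setP => x; rewrite inE; apply/imsetP/idP.
  move=> [i]; rewrite inE => lij ->.
  rewrite (tnth_nth (tnth t i)) -(nth_take (tnth t i) (n0 := j.+1)) //.
  by apply: mem_nth; rewrite size_take size_tuple; case: ifP => // _; rewrite ltnS.
move=> /(nthP (tnth t j)) [i]; rewrite size_take size_tuple => lij <-.
have ik : (i < k)%N by move: lij; case: ifP => h1 h2; lia.
have lij' : (i <= j)%N by move: lij (ltn_ord j); case: ifP => h1 h2; lia.
exists (Ordinal ik); first by rewrite inE.
by rewrite nth_take // [RHS](tnth_nth (tnth t j)).
Qed.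

Lemma flag_pre r (g : {set 'I_r} -> 'I_r) k (a : k.-tuple 'I_r) (p : 'S_k) :
  map g (flag a p) = pre g [tuple tnth a (p i) | i < k].
Proof.
rewrite /flag /pre size_tuple -val_enum_ord -map_comp -map_comp.
apply/eq_map => j /=; congr g; rewrite -[X in [set x in take _ X]]/(tval [tuple tnth a (p i) | i < k]) -set_prefix.
by apply: eq_imset => i; rewrite tnth_mktuple.
Qed.

Lemma Fs_ext k (f f' : 'I_k -> nat) : f =1 f' -> Fs f = Fs f'.
Proof. by move=> e; apply: eq_bigr => i _; apply: eq_bigr => j _; rewrite !e. Qed.

Lemma orient_perm r k (a : k.-tuple 'I_r) (p : 'S_k) A : uniq a ->
  orient [tuple tnth a (p i) | i < k] A = sgn p * orient a A.
Proof.
move=> ua.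
have pe : perm_eq [tuple tnth a (p i) | i < k] a by apply/tuple_permP; exists p.
rewrite /orient (perm_uniq pe) ua /=.
have -> : [set x in [tuple tnth a (p i) | i < k]] = [set x in a].
  by apply/setP => x; rewrite !inE (perm_mem pe).
case: eqP => _; last by rewrite mulr0.
rewrite (ninv_tuple [tuple tnth a (p i) | i < k]) ninv_tuple /sgn.
rewrite (@Fs_ext _ _ ((fun i => val (tnth a i)) \o p)); last first.
  by move=> i /=; rewrite tnth_mktuple.
apply: Fs_perm => i j /= /val_inj; exact/tuple_uniqP.
Qed.

Lemma orient_rev r (s : seq 'I_r) A :
  (-1) ^+ 'C(size s, 2) * orient (rev s) A = orient s A.
Proof.
rewrite /orient rev_uniq.
have -> : [set x in rev s] = [set x in s] by apply/setP => x; rewrite !inE mem_rev.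
case: ifP => [/andP [us _]|_]; last by rewrite mulr0.
pose t := in_tuple s.
have E1 : ninv (rev s) = Fs (fun i => val (tnth (rev_tuple t) i)) := ninv_tuple (rev_tuple t).
have E2 : ninv s = Fs (fun i => val (tnth t i)) := ninv_tuple t.
have fi : injective (fun i => val (tnth t i)).
  by move=> i j /= /val_inj; apply/tuple_uniqP.
have E3 : Fs (fun i => val (tnth (rev_tuple t) i)) = Fs (fun i => val (tnth t (rev_ord i))).
  apply: Fs_ext => i /=.
  rewrite (tnth_nth (tnth t i) (rev_tuple t) i) (tnth_nth (tnth t i) t (rev_ord i)) /=.
  by rewrite nth_rev.
rewrite E1 E2 E3 -(Fs_rev fi) exprD mulrAC -mulrA signrMK //.
Qed.

Lemma chain_top r (c : seq {set 'I_r}) : c != [::] ->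
  sorted (fun A B : {set 'I_r} => A \proper B) c ->
  exists2 L, L \in c & forall t, t \in c -> t \subset L.
Proof.
elim: c => [//|x s IH] _.
case: s IH => [|y s] IH.
  by move=> _; exists x; rewrite ?mem_head // => t; rewrite inE => /eqP ->.
move=> /= /andP [xy so].
have [L Ls HL] := IH isT so.
exists L; first by rewrite in_cons Ls orbT.
move=> t; rewrite in_cons => /orP [/eqP ->|]; last exact: HL.
apply: subset_trans (proper_sub xy) (HL _ (mem_head _ _)).
Qed.

Lemma straight_assemb r (g : {set 'I_r} -> 'I_r) : straightening g -> assemblage g.
Proof.
move=> st; split.
  move=> c /and3P [ne af so].
  have [L Lc HL] := chain_top ne so.
  have fL : is_face L by move/allP: af; apply.
  apply/negP => /eqP E.
  move: fL => /andP [_ /negP]; apply.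
  apply/eqP/setP => v; rewrite inE; apply/idP.
  have : v \in [set g t | t in c] by rewrite E inE.
  move=> /imsetP [t tc ->].
  have : g t \in t by apply: st; move/allP: af; apply.
  by apply/subsetP; apply: HL.
move=> k a k0 ua fa A.
have H : forall S : {set 'I_r}, S \subset [set x in a] -> S != set0 -> g S \in S.
  move=> S sub ne; apply: st; rewrite /is_face ne /=.
  apply/eqP => ST; move: fa => /andP [_ /negP]; apply.
  by rewrite eqEsubset subsetT /= -ST.
have [s0 [us0 es0 ps0]] := pre_exists (erefl _) H.
have pe : perm_eq s0 a.
  apply: uniq_perm => // x.
  have -> : (x \in s0) = (x \in [set y in s0]) by rewrite inE.
  by rewrite es0 inE.
move/tuple_permP: pe => [p0 E0]; subst s0.
rewrite (bigD1 p0) //= big1 ?addr0.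
  by rewrite /push flag_pre ps0 orient_perm // /sgn signrMK.
move=> p np.
rewrite /push flag_pre /orient.
case: ifP => [/andP [up _]|_]; last by rewrite mulr0.
have pe : perm_eq [tuple tnth a (p i) | i < k] a by apply/tuple_permP; exists p.
have usp : uniq [tuple tnth a (p i) | i < k] by rewrite (perm_uniq pe).
have esp : [set x in [tuple tnth a (p i) | i < k]] = [set x in a].
  by apply/setP => x; rewrite !inE (perm_mem pe).
have gp : pre g [tuple tnth a (p i) | i < k] = [tuple tnth a (p i) | i < k].
  by apply: pre_good => //; rewrite esp.
have ET := pre_unique usp us0 gp ps0 (etrans esp (esym es0)).
case/eqP: np; apply/permP => i.
have := congr1 (fun t => nth (tnth a i) t i) ET.
rewrite -!(tnth_nth (tnth a i) [tuple tnth a (_ i) | i < k]) !tnth_mktuple.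
by move/(tuple_uniqP _ ua).
Qed.

Lemma assemb_straight r (g : {set 'I_r} -> 'I_r) : assemblage g -> straightening g.
Proof.
move=> [_ C] t ft.
have ne : t != set0 by case/andP: ft.
pose a := enum_tuple t.
have ua : uniq a := enum_uniq _.
have ea : [set x in a] = t by apply/setP => x; rewrite inE mem_enum.
have k0 : (0 < #|t|)%N by rewrite card_gt0.
have := C _ a k0 ua; rewrite ea => /(_ ft t).
have Ht : orient a t != 0.
  by rewrite /orient ua ea eqxx /= signr_eq0.
case: (pickP (fun p : 'S_#|t| => sgn p * push g (flag a p) t != 0)) => [p Hp|H0]; last first.
  rewrite big1 => [E|p _]; first by move: Ht; rewrite -E eqxx.
  by apply/eqP; move: (H0 p) => /= /negbFE.
move=> _.
move: Hp; rewrite /push flag_pre /orient.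
case: ifP => [/andP [_ /eqP es] _|]; last by rewrite mulr0 eqxx.
have pe : perm_eq [tuple tnth a (p i) | i < #|t|] a by apply/tuple_permP; exists p.
suff : g t \in [set x in pre g [tuple tnth a (p i) | i < #|t|]] by rewrite es.
rewrite inE /pre; set sp := tval [tuple tnth a (p i) | i < #|t|].
have ssp : size sp = #|t| by rewrite size_tuple.
have -> : t = [set x in take (#|t|.-1).+1 sp].
  by rewrite prednK // take_oversize ?ssp // -ea; apply/setP => x; rewrite !inE (perm_mem pe).
apply: (map_f (fun j => g [set x in take j.+1 sp])).
by rewrite mem_iota ssp add0n prednK // leqnn.
Qed.

Lemma assemb_iff r (g : {set 'I_r} -> 'I_r) : assemblage g <-> straightening g.
Proof. by split; [apply: assemb_straight | apply: straight_assemb]. Qed.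

Lemma dual_push r (g : {set 'I_r} -> 'I_r) c A :
  dual_chain_map g c A = push (dual_vertex_map g) c A.
Proof.
rewrite /dual_chain_map /push /Lambda_sign /Lambda_flag map_rev -map_comp.
by rewrite -(orient_rev (map (dual_vertex_map g) c)) size_map.
Qed.

Lemma comp_s_id_ext r (F G : seq {set 'I_r} -> {set 'I_r} -> int) :
  (forall c A, F c A = G c A) -> comp_s_id F -> comp_s_id G.
Proof.
move=> e CF k a k0 ua fa A; rewrite -(CF k a k0 ua fa A).
by apply: eq_bigr => p _; rewrite e.
Qed.

Lemma is_faceC r (t : {set 'I_r}) : is_face (~: t) = is_face t.
Proof.
have e1 : (~: t == set0) = (t == setT).
  by apply/eqP/eqP => [h|->]; [rewrite -(setCK t) h setC0 | rewrite setCT].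
have e2 : (~: t == setT) = (t == set0).
  by apply/eqP/eqP => [h|->]; [rewrite -(setCK t) h setCT | rewrite setC0].
by rewrite /is_face e1 e2 andbC.
Qed.

Close Scope ring_scope.

Theorem lemma6p8 (r : nat) (hr : (0 < r)%N) (g : {set 'I_r} -> 'I_r) :
  (assemblage g <-> straightening g) /\
  (cyclic_assemblage g <-> cyclic_straightening g) /\
  (cyclic_assemblage_dual g <-> cyclic_straightening_dual g).
Proof.
have A1 := assemb_iff g.
split=> //.
have A2 : cyclic_assemblage g <-> cyclic_straightening g.
  by rewrite /cyclic_assemblage /cyclic_straightening; split => -[h1 h2]; split => //; apply/A1.
split=> //.
have D : (simplicial (dual_vertex_map g) /\ comp_s_id (dual_chain_map g)) <->
         straightening (dual_vertex_map g).
  rewrite -assemb_iff; split => -[h1 h2]; split => //.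
    by apply: comp_s_id_ext h2 => c A; rewrite dual_push.
  by apply: comp_s_id_ext h2 => c A; rewrite dual_push.
have E : straightening (dual_vertex_map g) <->
         (forall t, is_face t -> rho_inv (g t) \notin t).
  split => h t ft.
    by rewrite -is_faceC in ft; have := h _ ft; rewrite /dual_vertex_map setCK inE.
  by rewrite /dual_vertex_map; have := h (~: t); rewrite is_faceC in_setC negbK; apply.
rewrite /cyclic_assemblage_dual /cyclic_straightening_dual.
by split => -[h1 h2]; split; [apply/A2 | apply/E/D | apply/A2 | apply/D/E].
Qed.
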